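(* The set $\mathbb{R}_\mathcal{I}$ of interval numbers, equipped with the addition $\bar a+\bar b=\langle a_c+b_c;\,a_wb_w\rangle$ and the scalar multiplication $k\bar a=\langle ka_c;\,a_w^{k}\rangle$ ($k\in\mathbb{R}$), is a (real) linear space.
   Context: An interval number is a closed interval $\bar a=[a_l,a_r]$ with $a_l,a_r\in\mathbb{R}$ and $a_l<a_r$ (real numbers are not regarded as degenerate intervals). $\mathbb{R}_\mathcal{I}$ denotes the set of all interval numbers. For $\bar a=[a_l,a_r]$ put $a_c=(a_l+a_r)/2$ (center) and $a_w=(a_r-a_l)/2>0$ (radius), and write $\bar a=\langle a_c;a_w\rangle$, i.e. $\langle a_c;a_w\rangle=[a_c-a_w,a_c+a_w]$. *)

(* Defs.v *)
From HB Require Import structures.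
From mathcomp Require Import all_boot all_order all_algebra.
From mathcomp Require Import all_classical all_reals all_analysis.
From mathcomp Require Import lra.
Set Implicit Arguments. Unset Strict Implicit. Unset Printing Implicit Defensive.
Import Order.TTheory GRing.Theory Num.Theory.
Local Open Scope ring_scope.

Record inum (R : realType) := Interval {
  il : R; ir : R; il_lt_ir : il < ir }.

Section IntervalNumbers.
Variable R : realType.

Definition center (a : inum R) : R := (il a + ir a) / 2.
Definition radius (a : inum R) : R := (ir a - il a) / 2.

Lemma radius_gt0 (a : inum R) : 0 < radius a.
Proof. by rewrite /radius divr_gt0 // subr_gt0 il_lt_ir. Qed.

Lemma cw_lt (c w : R) : 0 < w -> c - w < c + w.
Proof. move=> hw; lra. Qed.

(* <c; w> = [c - w, c + w] *)
Definition cw (c w : R) (hw : 0 < w) : inum R := Interval (cw_lt c hw).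

Definition iadd (a b : inum R) : inum R :=
  cw (center a + center b) (mulr_gt0 (radius_gt0 a) (radius_gt0 b)).

Definition iscale (k : R) (a : inum R) : inum R :=
  cw (k * center a) (powR_gt0 k (radius_gt0 a)).

End IntervalNumbers.

(* Main.v *)
Require Import Defs.
From HB Require Import structures.
From mathcomp Require Import all_boot all_order all_algebra.
From mathcomp Require Import all_classical all_reals all_analysis.
From mathcomp Require Import ring lra.
Import Order.TTheory GRing.Theory Num.Theory.
Local Open Scope ring_scope.

Lemma inum_eq (R : realType) (a b : inum R) :
  il a = il b -> ir a = ir b -> a = b.
Proof.
case: a => la ra ha; case: b => lb rb hb /= El Er.
subst; by rewrite (eq_irrelevance ha hb).
Qed.

Lemma cw_eq (R : realType) (c1 c2 w1 w2 : R) (h1 : 0 < w1) (h2 : 0 < w2) :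
  c1 = c2 -> w1 = w2 -> cw c1 h1 = cw c2 h2.
Proof. by move=> Ec Ew; apply: inum_eq => /=; rewrite Ec Ew. Qed.

Lemma center_cw (R : realType) (c w : R) (h : 0 < w) : Defs.center (cw c h) = c.
Proof. rewrite /Defs.center /cw /=; by field. Qed.

Lemma radius_cw (R : realType) (c w : R) (h : 0 < w) : Defs.radius (cw c h) = w.
Proof. rewrite /Defs.radius /cw /=; by field. Qed.

Lemma cw_cr (R : realType) (a : inum R) : cw (Defs.center a) (radius_gt0 a) = a.
Proof. apply: inum_eq; rewrite /cw /= /Defs.center /Defs.radius; by field. Qed.

Lemma cw_eq' (R : realType) (c w : R) (h : 0 < w) (a : inum R) :
  c = Defs.center a -> w = Defs.radius a -> cw c h = a.
Proof. move=> Ec Ew; rewrite -[RHS]cw_cr; exact: cw_eq. Qed.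

Lemma cadd (R : realType) (a b : inum R) :
  Defs.center (iadd a b) = Defs.center a + Defs.center b.
Proof. exact: center_cw. Qed.
Lemma radd (R : realType) (a b : inum R) :
  Defs.radius (iadd a b) = Defs.radius a * Defs.radius b.
Proof. exact: radius_cw. Qed.
Lemma cscale (R : realType) (k : R) (a : inum R) :
  Defs.center (iscale k a) = k * Defs.center a.
Proof. exact: center_cw. Qed.
Lemma rscale (R : realType) (k : R) (a : inum R) :
  Defs.radius (iscale k a) = Defs.radius a `^ k.
Proof. exact: radius_cw. Qed.
Lemma inum_eq2 (R : realType) (a b : inum R) :
  Defs.center a = Defs.center b -> Defs.radius a = Defs.radius b -> a = b.
Proof. by move=> E1 E2; rewrite -(cw_cr _ a) -(cw_cr _ b); apply: cw_eq. Qed.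

Lemma p1 (R : realType) : forall a b c : inum R, iadd a (iadd b c) = iadd (iadd a b) c.
Proof.
  move=> a b c; apply: inum_eq2; rewrite ?cadd ?radd.
    exact: addrA.
  exact: mulrA.
Qed.
Lemma p2 (R : realType) : forall a b : inum R, iadd a b = iadd b a.
Proof.
  move=> a b; apply: inum_eq2; rewrite ?cadd ?radd.
    exact: addrC.
  exact: mulrC.
Qed.
Lemma p3 (R : realType) : exists z : inum R,
     (forall a : inum R, iadd a z = a) /\
     (forall a : inum R, exists b : inum R, iadd a b = z).
Proof.
have h1 : (0 : R) < 1 by exact: ltr01.
  exists (cw 0 h1); split.
    move=> a; apply: inum_eq2; rewrite ?cadd ?radd.
      by rewrite (center_cw _ _ _ h1) addr0.
    by rewrite (radius_cw _ _ _ h1) mulr1.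
  move=> a; have hi : 0 < (Defs.radius a)^-1 by rewrite invr_gt0 radius_gt0.
  have rn : Defs.radius a != 0 by apply: lt0r_neq0; apply: radius_gt0.
  exists (cw (- Defs.center a) hi); apply: inum_eq2; rewrite ?cadd ?radd.
    by rewrite (center_cw _ _ _ hi) (center_cw _ _ _ h1) subrr.
  by rewrite (radius_cw _ _ _ hi) (radius_cw _ _ _ h1) mulfV.
Qed.
Lemma p4 (R : realType) : forall (k l : R) (a : inum R), iscale k (iscale l a) = iscale (k * l) a.
Proof.
  move=> k l a; apply: inum_eq2; rewrite ?cscale ?rscale.
    exact: mulrA.
  by rewrite (mulrC k) powRrM.
Qed.
Lemma p5 (R : realType) : forall a : inum R, iscale 1 a = a.
Proof.
  move=> a; apply: inum_eq2; rewrite ?cscale ?rscale.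
    exact: mul1r.
  exact/powRr1/ltW/radius_gt0.
Qed.
Lemma p6 (R : realType) : forall (k : R) (a b : inum R),
     iscale k (iadd a b) = iadd (iscale k a) (iscale k b).
Proof.
  move=> k a b; apply: inum_eq2; rewrite ?cscale ?rscale ?cadd ?radd ?cscale ?rscale.
    exact: mulrDr.
  by apply: powRM; apply/ltW/radius_gt0.
Qed.
Lemma p7 (R : realType) : forall (k l : R) (a : inum R),
     iscale (k + l) a = iadd (iscale k a) (iscale l a).
Proof.
move=> k l a; apply: inum_eq2; rewrite ?cscale ?rscale ?cadd ?radd ?cscale ?rscale.
  exact: mulrDl.
apply: powRD; apply/implyP => _; apply: lt0r_neq0; apply: radius_gt0.
Qed.

Theorem theorem2p41 (R : realType) :
  (forall a b c : inum R, iadd a (iadd b c) = iadd (iadd a b) c) /\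
  (forall a b : inum R, iadd a b = iadd b a) /\
  (exists z : inum R,
     (forall a : inum R, iadd a z = a) /\
     (forall a : inum R, exists b : inum R, iadd a b = z)) /\
  (forall (k l : R) (a : inum R), iscale k (iscale l a) = iscale (k * l) a) /\
  (forall a : inum R, iscale 1 a = a) /\
  (forall (k : R) (a b : inum R),
     iscale k (iadd a b) = iadd (iscale k a) (iscale k b)) /\
  (forall (k l : R) (a : inum R),
     iscale (k + l) a = iadd (iscale k a) (iscale l a)).
Proof.
exact: (conj (@p1 R) (conj (@p2 R) (conj (@p3 R) (conj (@p4 R) (conj (@p5 R) (conj (@p6 R) (@p7 R))))))).
Qed.
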